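(* For odd positive integers $k$ and $m$, $$[\pi(e_{n,1}^{(n+k)}),\pi(e_{n,1}^{(n+m)})]=0.$$
   Context: Let $\mathfrak g=Q(n)$ with even basis $e_{i,j}$, odd basis $f_{i,j}$, $\chi(x)=\mathrm{otr}(xE)$ with $E=\sum_{i=1}^{n-1}f_{i,i+1}$ regular nilpotent, $\mathfrak m$ spanned by $e_{i,j},f_{i,j}$ ($i>j$), $\chi(e_{i+1,i})=1$ and $\chi=0$ on the other basis vectors of $\mathfrak m$, $I_\chi$ the left ideal generated by $a-\chi(a)$ ($a\in\mathfrak m$), $\pi:U(\mathfrak g)\to U(\mathfrak g)/I_\chi$, and $W_\chi=\{\pi(y):\mathrm{ad}(a)y\in I_\chi\ \forall a\in\mathfrak m\}$ with product $\pi(y_1)\pi(y_2)=\pi(y_1y_2)$. Sergeev's elements: $e_{i,j}^{(1)}=e_{i,j}$, $f_{i,j}^{(1)}=f_{i,j}$, $e_{i,j}^{(m)}=\sum_k e_{i,k}e_{k,j}^{(m-1)}+(-1)^{m+1}\sum_k f_{i,k}f_{k,j}^{(m-1)}$, $f_{i,j}^{(m)}=\sum_k e_{i,k}f_{k,j}^{(m-1)}+(-1)^{m+1}\sum_k f_{i,k}e_{k,j}^{(m-1)}$; the elements $\pi(e_{n,1}^{(m)})$ lie in $W_\chi$. *)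

(* Defs.v *)
From HB Require Import structures.
From mathcomp Require Import all_boot all_order all_algebra all_field.
Set Implicit Arguments. Unset Strict Implicit. Unset Printing Implicit Defensive.
Import Order.TTheory GRing.Theory Num.Theory.
Local Open Scope ring_scope.

(* Q(n) over C with even basis e i j and odd basis f i j, indices 1..n.
   A family of elements (e, f) of a C-algebra A satisfying the defining
   relations x y - (-1)^{|x||y|} y x = [x, y] of U(Q(n)) is the same as an
   algebra morphism U(Q(n)) -> A. *)

Definition idx (n i : nat) : bool := (1 <= i <= n)%N.

Definition delta (A : ringType) (i j : nat) : A := (i == j)%:R.

Definition Qn_relations (A : ringType) (n : nat) (e f : nat -> nat -> A) : Prop :=
  forall i j k l, idx n i -> idx n j -> idx n k -> idx n l ->
    [/\ e i j * e k l - e k l * e i j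
          = delta A j k * e i l - delta A l i * e k j,
        e i j * f k l - f k l * e i j
          = delta A j k * f i l - delta A l i * f k j
      & f i j * f k l + f k l * f i j
          = delta A j k * e i l + delta A l i * e k j].

(* Sergeev's elements: sergeev e f n m = (e^{(m)}, f^{(m)}) for m >= 1
   (sergeev at m = 0 is a junk value equal to (e, f)). *)
Fixpoint sergeev (A : ringType) (n : nat) (e f : nat -> nat -> A) (m : nat)
  : (nat -> nat -> A) * (nat -> nat -> A) :=
  match m with
  | 0 => (e, f)
  | m'.+1 =>
    match m' with
    | 0 => (e, f)
    | _ =>
      let p := sergeev n e f m' in
      (fun i j => \sum_(1 <= k < n.+1) e i k * p.1 k j
                  + (-1) ^+ m.+1 * \sum_(1 <= k < n.+1) f i k * p.2 k j,
       fun i j => \sum_(1 <= k < n.+1) e i k * p.2 k j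
                  + (-1) ^+ m.+1 * \sum_(1 <= k < n.+1) f i k * p.1 k j)
    end
  end.

Definition sergeev_e (A : ringType) n (e f : nat -> nat -> A) m :=
  (sergeev n e f m).1.

Definition is_left_ideal (A : ringType) (L : A -> Prop) : Prop :=
  [/\ L 0, (forall x y, L x -> L y -> L (x + y)) & (forall a x, L x -> L (a * x))].

(* chi on the basis of m:  chi(e_{i+1,i}) = 1, chi = 0 on other e_ij, f_ij (i > j). *)
Definition chi_e (A : ringType) (i j : nat) : A := (i == j.+1)%:R.

(* Main.v *)
From HB Require Import structures.
Require Import Defs.
From mathcomp Require Import all_boot all_order all_algebra all_field.
Import GRing.Theory.
Local Open Scope ring_scope.

Inductive zt : Type := ZA of nat | ZZ | ZD of zt & zt | ZN of zt.
Fixpoint zev (V : zmodType) (env : seq V) (t : zt) {struct t} : V :=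
  match t with ZA i => nth 0 env i | ZZ => 0 | ZD a b => zev V env a + zev V env b
  | ZN a => - zev V env a end.
Arguments zev {V}.
Fixpoint zco (t : zt) (i : nat) : int :=
  match t with ZA j => ((i == j) : nat)%:Z | ZZ => 0 | ZD a b => zco a i + zco b i
  | ZN a => - zco a i end.

Lemma zev_sum (V : zmodType) (env : seq V) t :
  zev env t = \sum_(i < size env) env`_i *~ zco t i.
Proof.
elim: t => [j||a IHa b IHb|a IHa] /=.
- case: (ltnP j (size env)) => hj.
    rewrite (bigD1 (Ordinal hj)) //= eqxx mulr1z big1 ?addr0 // => i /eqP hi.
    have : (i : nat) != j by apply/eqP => e; apply: hi; apply: val_inj.
    by move/negbTE => ->; rewrite mulr0z.
  rewrite nth_default // big1 // => i _.
  have : (i : nat) != j by rewrite neq_ltn (leq_trans (ltn_ord i) hj).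
  by move/negbTE => ->; rewrite mulr0z.
- by rewrite big1 // => i _; rewrite mulr0z.
- by rewrite IHa IHb -big_split /=; apply: eq_bigr => i _; rewrite mulrzDr.
- by rewrite IHa -sumrN; apply: eq_bigr => i _; rewrite mulrNz.
Qed.

Lemma zsound (V : zmodType) (env : seq V) t1 t2 :
  all (fun i => zco t1 i == zco t2 i) (iota 0 (size env)) -> zev env t1 = zev env t2.
Proof.
move=> /allP h; rewrite !zev_sum; apply: eq_bigr => i _.
by rewrite (eqP (h i _)) // mem_iota leq0n add0n ltn_ord.
Qed.

Ltac zeqb x y := constr:(ltac:(first [unify x y; exact true | exact false]) : bool).
Ltac zidx x l :=
  lazymatch l with
  | cons ?y ?l' => let b := zeqb x y in
      lazymatch b with true => constr:(0%N) | false => let k := zidx x l' in constr:(S k) end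
  end.
Ltac zmem x l :=
  lazymatch l with
  | nil => constr:(false)
  | cons ?y ?l' => let b := zeqb x y in
      lazymatch b with true => constr:(true) | false => zmem x l' end
  end.
Ltac zapp l x :=
  lazymatch l with
  | nil => constr:(cons x nil)
  | cons ?y ?l' => let r := zapp l' x in constr:(cons y r)
  end.
Ltac zreify t env :=
  lazymatch t with
  | (?a + ?b)%R =>
      let p := zreify a env in
      lazymatch p with (?ta, ?e1) =>
        let q := zreify b e1 in
        lazymatch q with (?tb, ?e2) => constr:((ZD ta tb, e2)) end end
  | (- ?a)%R =>
      let p := zreify a env in
      lazymatch p with (?ta, ?e1) => constr:((ZN ta, e1)) end
  | 0%R => constr:((ZZ, env))
  | _ =>
      let m := zmem t env in
      lazymatch m with
      | true => let k := zidx t env in constr:((ZA k, env))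
      | false => let e1 := zapp env t in let k := zidx t e1 in constr:((ZA k, e1))
      end
  end.
Ltac zgroup :=
  lazymatch goal with
  | |- @eq ?V ?l ?r =>
    let p := zreify l (@nil V) in
    lazymatch p with (?tl, ?e1) =>
      let q := zreify r e1 in
      lazymatch q with (?tr, ?e2) =>
        change (zev e2 tl = zev e2 tr); apply: zsound; vm_compute; reflexivity
      end end
  end.


Lemma Zl1 (V : zmodType) (a b c : V) : - c = - b + a - (a - b + c).
Proof. by rewrite opprD opprB addrA (addrC (-b)) -(opprB a b) subrr add0r. Qed.

Ltac zdbg :=
  lazymatch goal with
  | |- @eq ?V ?l ?r =>
    let p := zreify l (@nil V) in
    lazymatch p with (?tl, ?e1) =>
      let q := zreify r e1 in
      lazymatch q with (?tr, ?e2) => idtac e2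
      end end
  end.
Ltac nexp := rewrite ?(mulrDr, mulrDl, mulrBr, mulrBl, mulN1r, mulrN1, mulrN, mulNr, mulrA, opprD, opprB, (@opprK _), mulr1, mul1r, mulr0, mul0r).
Lemma zuse (V : zmodType) (L R hl hr : V) : hl = hr -> L - R = hl - hr -> L = R.
Proof. by move=> -> /eqP; rewrite subrr subr_eq0 => /eqP. Qed.

Section Abstract.
Variable R : pzRingType.
Variables (M1 M2 P Q S Dm : R) (X Y : nat -> R).
Hypothesis PM : P * M1 = M2 * P.
Hypothesis MP : M1 * P = P * M2.
Hypothesis QM : Q * M1 = - (M2 * Q).
Hypothesis MQ : M1 * Q = - (Q * M2).
Hypothesis HS : S = P + Q.
Hypothesis HDm : Dm = P - Q.
Hypothesis Cov1 : M2 * M1 - M1 * M2 = S * M1 - M1 * S.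
Hypothesis X0 : X 0 = 1.
Hypothesis XSl : forall r, X r.+1 = M1 * X r.
Hypothesis XSr : forall r, X r.+1 = X r * M1.
Hypothesis Y0 : Y 0 = 1.
Hypothesis YSl : forall r, Y r.+1 = M2 * Y r.
Hypothesis YSr : forall r, Y r.+1 = Y r * M2.

Lemma Cov r : M2 * X r - X r * M2 = S * X r - X r * S.
Proof.
elim: r => [|r IH]; first by rewrite X0 !mulr1 !mul1r !subrr.
have E1 : M2 * X r.+1 - X r.+1 * M2 = (M2 * M1 - M1 * M2) * X r + M1 * (M2 * X r - X r * M2).
  by rewrite XSl mulrBl mulrBr !mulrA addrA subrK.
rewrite E1 Cov1 IH mulrBl mulrBr !mulrA addrA subrK -XSl.
by rewrite -!mulrA -XSl.
Qed.

Lemma M2S : M2 * S = Dm * M1.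
Proof. by rewrite HS HDm mulrDr mulrBl PM QM (@opprK R). Qed.
Lemma SM2 : S * M2 = M1 * Dm.
Proof. by rewrite HS HDm mulrDl mulrBr MP MQ (@opprK R). Qed.
Lemma M2Dm : M2 * Dm = S * M1.
Proof. by rewrite HS HDm mulrBr mulrDl PM QM. Qed.
Lemma DmM2 : Dm * M2 = M1 * S.
Proof. by rewrite HS HDm mulrBl mulrDr MP MQ. Qed.

Lemma c2 r : (- X r) * M2 = - (X r * S) - (- (S * X r)) + M2 * (- X r).
Proof.
rewrite mulNr mulrN (@opprK R).
have /eqP := Cov r; rewrite subr_eq => /eqP ->.
exact: Zl1.
Qed.

Lemma c1 r : (- (X r * S)) * M2 = (X r.+2 - X r.+1 * Dm) - (X r.+2 - Dm * X r.+1) + M2 * (- (S * X r)).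
Proof.
rewrite mulNr mulrN -mulrA SM2 mulrA -XSr mulrA M2S -mulrA -XSl.
zgroup.
Qed.

Lemma c0 r : (X r.+2 - X r.+1 * Dm) * M2 = M2 * (X r.+2 - Dm * X r.+1).
Proof.
rewrite mulrBl mulrBr -mulrA DmM2 (mulrA (X r.+1)) -XSr (mulrA M2) M2Dm -mulrA -XSl.
have /eqP := Cov r.+2; rewrite subr_eq => /eqP ->.
zgroup.
Qed.

Definition W r s := Y s * (X r.+2 - X r.+1 * Dm) + Y s.+1 * (- (X r * S)) + Y s.+2 * (- X r)
  - ((X r.+2 - Dm * X r.+1) * Y s + (- (S * X r)) * Y s.+1 + (- X r) * Y s.+2).

Lemma W0 r : W r 0 = 0.
Proof.
rewrite /W Y0 !YSl Y0 !mulr1 !mul1r.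
have e1 := c1 r; have e2 := c2 r.
transitivity (- ((- (X r * S)) * M2 - ((X r.+2 - X r.+1 * Dm) - (X r.+2 - Dm * X r.+1) + M2 * (- (S * X r))))
  - ((- X r) * M2 - (- (X r * S) - (- (S * X r)) + M2 * (- X r))) * M2
  - M2 * ((- X r) * M2 - (- (X r * S) - (- (S * X r)) + M2 * (- X r)))); last first.
  by rewrite e1 e2 !subrr mul0r mulr0 !subr0 oppr0.
nexp; zgroup.
Qed.

Lemma WS r s : W r s.+1 = W r s * M2.
Proof.
rewrite /W.
have e0 := c0 r; have e1 := c1 r; have e2 := c2 r.
transitivity (W r s * M2 - Y s * ((X r.+2 - X r.+1 * Dm) * M2 - M2 * (X r.+2 - Dm * X r.+1))
  - Y s.+1 * ((- (X r * S)) * M2 - ((X r.+2 - X r.+1 * Dm) - (X r.+2 - Dm * X r.+1) + M2 * (- (S * X r))))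
  - Y s.+2 * ((- X r) * M2 - (- (X r * S) - (- (S * X r)) + M2 * (- X r)))); last first.
  by rewrite e0 e1 e2 !subrr !mulr0 !subr0.
rewrite /W !YSr.
nexp; zgroup.
Qed.

Lemma Wz r s : W r s = 0.
Proof. by elim: s => [|s IH]; [exact: W0 | rewrite WS IH mul0r]. Qed.
End Abstract.


Section Final.
Variable A : pzRingType.
Variables (x y : nat -> A).
Definition cc p q := x p * x q - x q * x p.
Definition BB r s := y r.+1 * y s - y r * y s.+1
   + (if odd (r + s) then -1 else 1) * (y s * y r.+1 - y s.+1 * y r).
Hypothesis two : forall u : A, u + u = 0 -> u = 0.
Hypothesis x0c : forall q, x 0 * x q = x q * x 0.
Hypothesis relI : forall r s, cc r.+2 s - cc r s.+2 - cc r.+1 s - cc r s.+1 = BB r s.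

Lemma ccN p q : cc q p = - cc p q.
Proof. by rewrite /cc opprB. Qed.

Lemma E1 r s : ~~ odd (r + s) -> cc r.+2 s = cc r s.+2.
Proof.
move=> ev; have h1 := relI r s; have h2 := relI s r.
rewrite (ccN r s.+2) (ccN r.+2 s) (ccN r s.+1) (ccN r.+1 s) in h2.
have : (cc r.+2 s - cc r s.+2) + (cc r.+2 s - cc r s.+2) = 0.
  have -> : (cc r.+2 s - cc r s.+2) + (cc r.+2 s - cc r s.+2) = BB r s + BB s r.
    rewrite -h1 -h2; zgroup.
  rewrite /BB (addnC s) (negbTE ev); nexp; zgroup.
by move/two/eqP; rewrite subr_eq0 => /eqP.
Qed.

Lemma E2 r s : odd (r + s) -> cc r.+1 s = - cc r s.+1.
Proof.
move=> od; have h1 := relI r s; have h2 := relI s r.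
rewrite (ccN r s.+2) (ccN r.+2 s) (ccN r s.+1) (ccN r.+1 s) in h2.
have : (cc r.+1 s + cc r s.+1) + (cc r.+1 s + cc r s.+1) = 0.
  have -> : (cc r.+1 s + cc r s.+1) + (cc r.+1 s + cc r s.+1) = - (BB r s - BB s r).
    rewrite -h1 -h2; zgroup.
  rewrite /BB (addnC s) od; nexp; zgroup.
by move/two/eqP; rewrite addr_eq0 => /eqP.
Qed.

Lemma cc0 q : cc 0 q = 0.
Proof. by rewrite /cc x0c subrr. Qed.

Lemma cc_even a b : ~~ odd (a + b) -> cc a b = 0.
Proof.
elim/ltn_ind: a b => a IH b ev.
case: a IH ev => [|[|r]] IH ev; first exact: cc0.
  rewrite (E2 0 b) ?cc0 ?oppr0 //.
  by move: ev; rewrite add0n add1n /= negbK.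
have ev' : ~~ odd (r + b.+2) by move: ev; rewrite !addnS !addSn /= !negbK.
rewrite (E1 r b); first by apply: IH.
by move: ev; rewrite !addSn /= !negbK.
Qed.
End Final.
Arguments cc {A} x p q.
Arguments BB {A} y r s.

Section Ops.
Variables (A : pzRingType) (T : finType).
Let N := #|{: T}|.
Definition ent (X : 'M[A]_N) (x y : T) : A := X (enum_rank x) (enum_rank y).
Definition mk (F : T -> T -> A) : 'M[A]_N := \matrix_(i, j) F (enum_val i) (enum_val j).
Lemma ent_mk F x y : ent (mk F) x y = F x y.
Proof. by rewrite /ent /mk mxE !enum_rankK. Qed.
Lemma ent_mul X Y x y : ent (X * Y) x y = \sum_z ent X x z * ent Y z y.
Proof.
rewrite /ent -mulmxE mxE (reindex (@enum_rank T)) //=.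
by exists enum_val => z _; rewrite ?enum_rankK ?enum_valK.
Qed.
Lemma ent_add X Y x y : ent (X + Y) x y = ent X x y + ent Y x y.
Proof. by rewrite /ent mxE. Qed.
Lemma ent_opp X x y : ent (- X) x y = - ent X x y.
Proof. by rewrite /ent mxE. Qed.
Lemma ent_sub X Y x y : ent (X - Y) x y = ent X x y - ent Y x y.
Proof. by rewrite ent_add ent_opp. Qed.
Lemma ent0 x y : ent 0 x y = 0.
Proof. by rewrite /ent mxE. Qed.
Lemma ent1 x y : ent 1 x y = (x == y)%:R.
Proof. by rewrite /ent mxE (inj_eq (@enum_rank_inj _)). Qed.
Lemma ent_eq X Y : (forall x y, ent X x y = ent Y x y) -> X = Y.
Proof.
move=> h; apply/matrixP => i j.
by have := h (enum_val i) (enum_val j); rewrite /ent !enum_valK.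
Qed.
End Ops.
Arguments ent {A T} X x y.
Arguments mk {A T} F.

Section Scal.
Variable A : pzRingType.
Definition sg (b : bool) : A := if b then -1 else 1.
Definition dl {T : eqType} (x y : T) : A := (x == y)%:R.
Lemma sgC b u : sg b * u = u * sg b.
Proof. by case: b; rewrite /sg ?mulN1r ?mulrN1 ?mul1r ?mulr1. Qed.
Lemma dlC (T : eqType) (x y : T) u : dl x y * u = u * dl x y.
Proof. by rewrite /dl (commr_nat u). Qed.
Lemma sgM b c : sg b * sg c = sg (b (+) c).
Proof. by case: b; case: c; rewrite /sg /= ?mulrNN ?mulr1 ?mul1r ?mulN1r ?mulrN1. Qed.
Lemma sgK b : sg b * sg b = 1.
Proof. by rewrite sgM addbb. Qed.
Lemma dl_sym (T : eqType) (x y : T) : dl x y = dl y x.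
Proof. by rewrite /dl eq_sym. Qed.
Lemma sum_dl (T : finType) (c : T) (F : T -> A) : \sum_z dl z c * F z = F c.
Proof.
rewrite (bigD1 c) //= /dl eqxx mul1r big1 ?addr0 // => z /negbTE ->.
by rewrite mul0r.
Qed.
Lemma sum_dr (T : finType) (c : T) (F : T -> A) : \sum_z F z * dl z c = F c.
Proof.
under eq_bigr => z _ do rewrite -dlC. exact: sum_dl.
Qed.
Lemma sum_dl2 (T : finType) (c d : T) (U V : T -> A) :
  \sum_z (dl c z * U z) * (dl z d * V z) = dl c d * (U c * V c).
Proof.
under eq_bigr => z _ do rewrite dl_sym -mulrA.
rewrite sum_dl mulrA -dlC mulrA.
by [].
Qed.
Lemma sg2 b c (u v : A) : sg b * u * (sg c * v) = sg (b (+) c) * (u * v).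
Proof. by case: b; case: c; rewrite /sg /= ?mulN1r ?mulrN1 ?mul1r ?mulr1 ?mulrN ?mulNr ?opprK. Qed.
Lemma sum_dm (T : finType) (d : T) (W V : T -> A) :
  \sum_z W z * (dl z d * V z) = W d * V d.
Proof.
under eq_bigr => z _ do rewrite mulrA -dlC -mulrA.
by rewrite sum_dl.
Qed.
End Scal.
Arguments dl {A T} x y.
Arguments sg {A} b.

Lemma sum_pair (A : pzRingType) (T1 T2 : finType) (F : T1 * T2 -> A) :
  \sum_z F z = \sum_z1 \sum_z2 F (z1, z2).
Proof. by rewrite pair_bigA; apply: eq_bigr => -[]. Qed.

Section Conc.
Variables (n : nat) (A : pzRingType) (e f : nat -> nat -> A).
Definition K := ('I_n * bool)%type.
Definition KK := (K * K)%type.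
Definition g (p : bool) (i j : 'I_n) : A := if p then f i.+1 j.+1 else e i.+1 j.+1.
Arguments g : simpl never.
Hypothesis G : forall p q i j k l, g p i j * g q k l =
  sg (p && q) * (g q k l * g p i j) + dl k j * g (p (+) q) i l
  - sg (p && q) * (dl i l * g (p (+) q) k j).
Definition Mq (a b : K) : A := sg b.2 * g (a.2 (+) b.2) a.1 b.1.
Fixpoint Tp (r : nat) (a b : K) : A :=
  if r is r'.+1 then \sum_z Mq a z * Tp r' z b else dl a b.

Lemma Tp1 a b : Tp 1 a b = Mq a b.
Proof. by rewrite /= sum_dr. Qed.

Lemma TpSr r a b : Tp r.+1 a b = \sum_z Tp r a z * Mq z b.
Proof.
elim: r a b => [|r IH] a b.
  rewrite Tp1 /=; under eq_bigr => z _ do rewrite dl_sym.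
  by rewrite sum_dl.
have -> : Tp r.+2 a b = \sum_z Mq a z * Tp r.+1 z b by [].
under eq_bigr => z _ do rewrite IH big_distrr.
rewrite exchange_big /=; apply: eq_bigr => w _.
by rewrite big_distrl /=; apply: eq_bigr => z _; rewrite mulrA.
Qed.

Local Notation N := #|{: KK}|.
Definition J (a : K) : K := (a.1, ~~ a.2).
Lemma JK : involutive J. Proof. by case=> i p; rewrite /J /= negbK. Qed.
Definition Xo r : 'M[A]_N :=
  mk (fun x y => dl x.2 y.2 * (sg ((x.1.2 (+) y.1.2) && x.2.2) * Tp r x.1 y.1)).
Definition piP (x : KK) : KK := (x.2, x.1).
Definition sP (x : KK) : A := sg (x.1.2 && x.2.2).
Definition piQ (x : KK) : KK := (J x.2, J x.1).
Definition sQ (x : KK) : A := sg (x.2.2 (+) (x.1.2 && x.2.2)).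
Definition Po : 'M[A]_N := mk (fun u v => dl v (piP u) * sP u).
Definition Qo : 'M[A]_N := mk (fun u v => dl v (piQ u) * sQ u).
Lemma piPK : involutive piP. Proof. by case. Qed.
Lemma piQK : involutive piQ. Proof. by case=> a b; rewrite /piQ /= !JK. Qed.

Lemma ent_perm_l (pi : KK -> KK) (s : KK -> A) X x y :
  ent (mk (fun u v => dl v (pi u) * s u) * X) x y = s x * ent X (pi x) y.
Proof.
rewrite ent_mul; under eq_bigr => z _ do rewrite ent_mk -mulrA.
by rewrite sum_dl.
Qed.

Lemma ent_perm_r (pi : KK -> KK) (s : KK -> A) (hpi : involutive pi) X x y :
  ent (X * mk (fun u v => dl v (pi u) * s u)) x y = ent X x (pi y) * s (pi y).
Proof.
rewrite ent_mul.
under eq_bigr => z _ do rewrite ent_mk mulrA -dlC -mulrA.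
have hd : forall z, dl y (pi z) = dl z (pi y) :> A.
  by move=> z; rewrite /dl eq_sym (inv_eq hpi).
under eq_bigr => z _ do rewrite hd.
by rewrite sum_dl.
Qed.

Lemma PP : Po * Po = 1.
Proof.
apply: ent_eq => x y.
rewrite {1}/Po ent_perm_l /Po ent_mk piPK ent1 /sP /piP /= [x.2.2 && _]andbC.
rewrite mulrA sgC -mulrA sgK mulr1 /dl eq_sym.
by [].
Qed.

Lemma entX1 x y : ent (Xo 1) x y = dl x.2 y.2 * (sg ((x.1.2 (+) y.1.2) && x.2.2) * Mq x.1 y.1).
Proof. by rewrite ent_mk Tp1. Qed.

Definition M2o := Po * Xo 1 * Po.
Lemma entM2 x y : ent M2o x y = dl x.1 y.1 * Mq x.2 y.2.
Proof.
rewrite /M2o {2}/Po (ent_perm_r _ _ piPK) {1}/Po ent_perm_l entX1 /piP /sP /=.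
case: x y => [[ai ap] [ci cp]] [[bi bp] [di dp]] /=.
rewrite /dl xpair_eqE.
have [_|hne] := eqVneq ai bi; last by rewrite !mul0r !mulr0 mul0r.
have [->|hne] := eqVneq ap bp; last by rewrite andbF !mul0r !mulr0 mul0r.
by case: bp; case: dp; case: cp; rewrite /sg /= ?mulN1r ?mulrN1 ?mul1r ?mulr1 ?mulrN ?mulNr ?opprK.
Qed.

Lemma X0 : Xo 0 = 1.
Proof.
apply: ent_eq => -[[ai ap] [ci cp]] [[bi bp] [di dp]].
rewrite ent_mk ent1 /= /dl !xpair_eqE.
have [_|hne] := eqVneq ai bi; rewrite /= ?mulr0 //.
by case: ap; case: bp; case: (ci == di); case: (cp == dp); rewrite /sg /= ?mulr1 ?mul1r ?mulr0 ?mul0r.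
Qed.

Lemma XSl r : Xo r.+1 = Xo 1 * Xo r.
Proof.
apply: ent_eq => -[a c] [b d].
rewrite ent_mul sum_pair ent_mk /=; symmetry.
under eq_bigr => z1 _ do (under eq_bigr => z2 _ do rewrite !ent_mk Tp1 /=).
under eq_bigr => z1 _ do rewrite sum_dl2.
rewrite [in RHS]big_distrr [in RHS]big_distrr /=.
apply: eq_bigr => z1 _; congr (_ * _).
by rewrite sg2 -andb_addl addbA -(addbA a.2) addbb addbF.
Qed.

Lemma XSr r : Xo r.+1 = Xo r * Xo 1.
Proof.
apply: ent_eq => -[a c] [b d].
rewrite ent_mul sum_pair ent_mk TpSr /=; symmetry.
under eq_bigr => z1 _ do (under eq_bigr => z2 _ do rewrite !ent_mk Tp1 /=).
under eq_bigr => z1 _ do rewrite sum_dl2.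
rewrite [in RHS]big_distrr [in RHS]big_distrr /=.
apply: eq_bigr => z1 _; congr (_ * _).
by rewrite sg2 -andb_addl addbA -(addbA a.2) addbb addbF.
Qed.


Ltac sgn := rewrite /sg /= ?andbT ?andbF ?mulN1r ?mulrN1 ?mul1r ?mulr1 ?mulrN ?mulNr ?opprK ?mulr0 ?mul0r ?oppr0.

Lemma QM : Qo * Xo 1 = - (M2o * Qo).
Proof.
apply: ent_eq => -[[ai ap] [ci cp]] [[bi bp] [di dp]].
rewrite ent_opp {1}/Qo ent_perm_l (ent_perm_r _ _ piQK) entX1 entM2 /sQ /piQ /J /Mq /dl /= !xpair_eqE.
by case: ap; case: bp; case: cp; case: dp; sgn.
Qed.

Lemma MQ : Xo 1 * Qo = - (Qo * M2o).
Proof.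
apply: ent_eq => -[[ai ap] [ci cp]] [[bi bp] [di dp]].
rewrite ent_opp {2}/Qo (ent_perm_r _ _ piQK) ent_perm_l entX1 entM2 /sQ /piQ /J /Mq /dl /= !xpair_eqE.
by case: ap; case: bp; case: cp; case: dp; sgn.
Qed.

Lemma entM2X1 x y : ent (M2o * Xo 1) x y = Mq x.2 y.2 * (sg ((x.1.2 (+) y.1.2) && y.2.2) * Mq x.1 y.1).
Proof.
rewrite ent_mul sum_pair.
under eq_bigr => z1 _ do (under eq_bigr => z2 _ do rewrite entM2 entX1 /= -mulrA).
under eq_bigr => z1 _ do rewrite -big_distrr /= sum_dm.
by rewrite (eq_bigr (fun z1 => dl z1 x.1 * (Mq x.2 y.2 * (sg ((z1.2 (+) y.1.2) && y.2.2) * Mq z1 y.1)))) ?sum_dl // => z1 _; rewrite dl_sym.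
Qed.

Lemma entX1M2 x y : ent (Xo 1 * M2o) x y = sg ((x.1.2 (+) y.1.2) && x.2.2) * Mq x.1 y.1 * Mq x.2 y.2.
Proof.
rewrite ent_mul sum_pair exchange_big /=.
under eq_bigr => z2 _ do (under eq_bigr => z1 _ do rewrite entM2 entX1 /= -mulrA).
under eq_bigr => z2 _ do rewrite -big_distrr /= sum_dm.
rewrite (eq_bigr (fun z2 => dl z2 x.2 * (sg ((x.1.2 (+) y.1.2) && z2.2) * Mq x.1 y.1 * Mq z2 y.2))) ?sum_dl // => z2 _.
rewrite dl_sym; have [->|h] := eqVneq z2 x.2; first by [].
by rewrite /dl (negbTE h) !mul0r.
Qed.

Lemma Cov1o : M2o * Xo 1 - Xo 1 * M2o = (Po + Qo) * Xo 1 - Xo 1 * (Po + Qo).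
Proof.
apply: ent_eq => -[[ai ap] [ci cp]] [[bi bp] [di dp]].
rewrite !ent_sub entM2X1 entX1M2 mulrDl mulrDr !ent_add /Po /Qo !ent_perm_l (ent_perm_r _ _ piPK) (ent_perm_r _ _ piQK) !entX1 /sP /sQ /piP /piQ /J /Mq /dl /= !xpair_eqE.
case: ap; case: bp; case: cp; case: dp; sgn; rewrite ?mulrA (G _ _ ai bi ci di) /dl; sgn; nexp; zgroup.
Qed.

Definition Yo s := Po * Xo s * Po.
Lemma entY s x y : ent (Yo s) x y = dl x.1 y.1 * Tp s x.2 y.2.
Proof.
rewrite /Yo {2}/Po (ent_perm_r _ _ piPK) {1}/Po ent_perm_l ent_mk /piP /sP /=.
case: x y => [[ai ap] [ci cp]] [[bi bp] [di dp]] /=.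
rewrite /dl xpair_eqE.
have [_|hne] := eqVneq ai bi; last by rewrite !mul0r !mulr0 mul0r.
have [->|hne] := eqVneq ap bp; last by rewrite andbF !mul0r !mulr0 mul0r.
by case: bp; case: dp; case: cp; rewrite /sg /= ?mulN1r ?mulrN1 ?mul1r ?mulr1 ?mulrN ?mulNr ?opprK.
Qed.

Lemma entYX s t x y : ent (Yo s * Xo t) x y = Tp s x.2 y.2 * (sg ((x.1.2 (+) y.1.2) && y.2.2) * Tp t x.1 y.1).
Proof.
rewrite ent_mul sum_pair.
under eq_bigr => z1 _ do (under eq_bigr => z2 _ do rewrite entY ent_mk /= -mulrA).
under eq_bigr => z1 _ do rewrite -big_distrr /= sum_dm.
by rewrite (eq_bigr (fun z1 => dl z1 x.1 * (Tp s x.2 y.2 * (sg ((z1.2 (+) y.1.2) && y.2.2) * Tp t z1 y.1)))) ?sum_dl // => z1 _; rewrite dl_sym.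
Qed.

Lemma entXY s t x y : ent (Xo t * Yo s) x y = sg ((x.1.2 (+) y.1.2) && x.2.2) * Tp t x.1 y.1 * Tp s x.2 y.2.
Proof.
rewrite ent_mul sum_pair exchange_big /=.
under eq_bigr => z2 _ do (under eq_bigr => z1 _ do rewrite entY ent_mk /= -mulrA).
under eq_bigr => z2 _ do rewrite -big_distrr /= sum_dm.
rewrite (eq_bigr (fun z2 => dl z2 x.2 * (sg ((x.1.2 (+) y.1.2) && z2.2) * Tp t x.1 y.1 * Tp s z2 y.2))) ?sum_dl // => z2 _.
rewrite dl_sym; have [->|h] := eqVneq z2 x.2; first by [].
by rewrite /dl (negbTE h) !mul0r.
Qed.

Lemma Wzero r s : W _ (Po + Qo) (Po - Qo) Xo Yo r s = 0.
Proof.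
have PMo : Po * Xo 1 = M2o * Po by rewrite /M2o -!mulrA PP mulr1.
have MPo : Xo 1 * Po = Po * M2o by rewrite /M2o !mulrA PP mul1r.
apply: (@Wz _ (Xo 1) M2o Po Qo (Po + Qo) (Po - Qo) Xo Yo PMo MPo QM MQ erefl erefl Cov1o X0 XSl XSr).
- by rewrite /Yo X0 mulr1 PP.
- by move=> q; rewrite /Yo /M2o XSl !mulrA -(mulrA _ Po Po) PP mulr1.
- by move=> q; rewrite /Yo /M2o XSr !mulrA -(mulrA _ Po Po) PP mulr1.
Qed.

Lemma TpJ r a b : Tp r (J a) (J b) = sg (odd r) * Tp r a b.
Proof.
elim: r a b => [|r IH] a b.
  by rewrite /= /dl (inj_eq (can_inj JK)) mul1r.
have -> : Tp r.+1 (J a) (J b) = \sum_z Mq (J a) z * Tp r z (J b) by [].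
have -> : Tp r.+1 a b = \sum_z Mq a z * Tp r z b by [].
rewrite (reindex J) /=; last by exists J => ? _; rewrite JK.
rewrite big_distrr /=; apply: eq_bigr => w _.
rewrite IH.
case: a w => [ai ap] [wi wp]; rewrite /Mq /J /=.
by case: ap; case: wp; case: (odd r); rewrite /sg /= ?negbK ?mulN1r ?mulrN1 ?mul1r ?mulr1 ?mulrN ?mulNr ?opprK.
Qed.

Lemma entRP Z x y : ent (Z * Po) x y = ent Z x (piP y) * sP (piP y).
Proof. exact: ent_perm_r piPK _ _ _. Qed.
Lemma entRQ Z x y : ent (Z * Qo) x y = ent Z x (piQ y) * sQ (piQ y).
Proof. exact: ent_perm_r piQK _ _ _. Qed.
Lemma entLP Z x y : ent (Po * Z) x y = sP x * ent Z (piP x) y.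
Proof. exact: ent_perm_l. Qed.
Lemma entLQ Z x y : ent (Qo * Z) x y = sQ x * ent Z (piQ x) y.
Proof. exact: ent_perm_l. Qed.

Arguments Tp : simpl never.
Lemma relE i j (r s : nat) : let x := fun r => Tp r (i,false) (j,false) in
  let y := fun r => Tp r (i,true) (j,false) in
  cc x r.+2 s - cc x r s.+2 - cc x r.+1 s - cc x r s.+1 = BB y r s.
Proof.
move=> x y.
have h := congr1 (fun Z => ent Z ((i,false),(i,false)) ((j,false),(j,false))) (Wzero r s).
move: h; rewrite /= /W ent0.
rewrite mulrBr (mulrA (Yo s)) mulrBr mulrN (mulrA (Yo s.+1)) mulrDr mulrN.
rewrite mulrBl -(mulrA (Po - Qo)) mulrBl mulNr -(mulrA (Po + Qo)) mulrDl mulNr.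
rewrite !ent_sub !ent_add ?ent_opp !entRP !entRQ !entLP !entLQ !entYX !entXY /piP /piQ /sP /sQ /J /=.
have zJ q : Tp q (i,false) (j,true) = sg (odd q) * y q.
  by rewrite -TpJ.
have xE q : Tp q (i,false) (j,false) = x q by [].
have yE q : Tp q (i,true) (j,false) = y q by [].
rewrite !zJ !xE !yE /= /cc /BB oddD.
case: (odd r); case: (odd s); rewrite /sg /=; nexp; move=> h; rewrite -[RHS]subr0 -h; zgroup.
Qed.
End Conc.
Arguments Mq {n A} e f a b.
Arguments g {n A} e f p i j.
Arguments Tp {n A} e f r a b : simpl never.

Lemma sgnE (A : nzRingType) m : (-1) ^+ m.+3 * (-1) ^+ m = -1 :> A.
Proof. by rewrite -exprD -signr_odd !addSn /= addnn odd_double /= expr1. Qed.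
Lemma sgnC (A : nzRingType) m (u v : A) : u * ((-1) ^+ m * v) = (-1) ^+ m * (u * v).
Proof. by rewrite -signr_odd; case: (odd m); rewrite ?expr1 ?expr0 ?mulN1r ?mul1r ?mulrN. Qed.

Section Main.
Variables (n : nat) (A : nzRingType) (e f : nat -> nat -> A).

Lemma dE (i j : 'I_n) : delta A i.+1 j.+1 = dl j i.
Proof. by rewrite /delta /dl eqSS eq_sym. Qed.

Lemma Grel : Qn_relations n e f -> forall p q (i j k l : 'I_n), g e f p i j * g e f q k l =
  sg (p && q) * (g e f q k l * g e f p i j) + dl k j * g e f (p (+) q) i l
  - sg (p && q) * (dl i l * g e f (p (+) q) k j).
Proof.
move=> hrel p q i j k l.
have id (u : 'I_n) : idx n u.+1 by rewrite /idx ltn_ord.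
have [h1 h2 h3] := hrel _ _ _ _ (id i) (id j) (id k) (id l).
have [h1' h2' h3'] := hrel _ _ _ _ (id k) (id l) (id i) (id j).
rewrite !dE in h1 h2 h3 h1' h2' h3'.
rewrite /g /sg; case: p; case: q => /=.
- by eapply zuse; [exact: h3|]; nexp; zgroup.
- by eapply zuse; [exact: (esym h2')|]; nexp; zgroup.
- by eapply zuse; [exact: h2|]; nexp; zgroup.
- by eapply zuse; [exact: h1|]; nexp; zgroup.
Qed.

Lemma sergS m : sergeev n e f m.+2 = (let p := sergeev n e f m.+1 in
      (fun i j => \sum_(1 <= k < n.+1) e i k * p.1 k j
                  + (-1) ^+ m.+3 * \sum_(1 <= k < n.+1) f i k * p.2 k j,
       fun i j => \sum_(1 <= k < n.+1) e i k * p.2 k j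
                  + (-1) ^+ m.+3 * \sum_(1 <= k < n.+1) f i k * p.1 k j)).
Proof. by []. Qed.

Lemma serg m (i j : 'I_n) : (sergeev n e f m.+1).1 i.+1 j.+1 = Tp e f m.+1 (i,false) (j,false)
  /\ (sergeev n e f m.+1).2 i.+1 j.+1 = (-1) ^+ m * Tp e f m.+1 (i,true) (j,false).
Proof.
elim: m i j => [|m IH] i j.
  by rewrite !Tp1 /Mq /g /sg /= !mul1r.
rewrite sergS; set p := sergeev _ _ _ m.+1; rewrite /=.
have TS a b : Tp e f m.+2 a b = \sum_z Mq e f a z * Tp e f m.+1 z b by [].
rewrite !TS !sum_pair !big_add1 /= !big_mkord.
under eq_bigr => k _ do rewrite big_bool /=.
under [in X in _ /\ X]eq_bigr => k _ do rewrite big_bool /=.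
rewrite /p; split.
  rewrite [X in X + _ = _](eq_bigr (fun k : 'I_n => e i.+1 k.+1 * Tp e f m.+1 (k,false) (j,false))); last first.
    by move=> k _; congr (_ * _); exact: (proj1 (IH k j)).
  rewrite [X in _ + _ * X = _](eq_bigr (fun k : 'I_n => f i.+1 k.+1 * ((-1) ^+ m * Tp e f m.+1 (k,true) (j,false)))); last first.
    by move=> k _; congr (_ * _); exact: (proj2 (IH k j)).
  under [X in _ + _ * X = _]eq_bigr => k _ do rewrite sgnC.
  rewrite -big_distrr mulrA sgnE mulN1r /Mq /g /sg /= big_split /=.
  under [X in _ = X + _]eq_bigr => k _ do rewrite mulN1r mulNr.
  under [X in _ = _ + X]eq_bigr => k _ do rewrite mul1r.
  rewrite sumrN; zgroup.
rewrite [X in X + _ = _](eq_bigr (fun k : 'I_n => e i.+1 k.+1 * ((-1) ^+ m * Tp e f m.+1 (k,true) (j,false)))); last first.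
  by move=> k _; congr (_ * _); exact: (proj2 (IH k j)).
rewrite [X in _ + _ * X = _](eq_bigr (fun k : 'I_n => f i.+1 k.+1 * Tp e f m.+1 (k,false) (j,false))); last first.
  by move=> k _; congr (_ * _); exact: (proj1 (IH k j)).
under [X in X + _ = _]eq_bigr => k _ do rewrite sgnC.
rewrite -big_distrr /Mq /g /sg /= big_split /=.
under [X in _ = _ * (X + _)]eq_bigr => k _ do rewrite mulN1r mulNr.
under [X in _ = _ * (_ + X)]eq_bigr => k _ do rewrite mul1r.
rewrite sumrN !exprS; nexp; zgroup.
Qed.
End Main.

Theorem proposition5p11 (n : nat) (hn : (0 < n)%N) (k m : nat)
    (hk : odd k) (hm : odd m)
    (A : algType algC) (e f : nat -> nat -> A) (hrel : Qn_relations n e f)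
    (L : A -> Prop) (hL : is_left_ideal L)
    (hchi : forall i j, (1 <= j)%N -> (j < i)%N -> (i <= n)%N ->
              L (e i j - chi_e A i j) /\ L (f i j)) :
  L (sergeev_e n e f (n + k) n 1 * sergeev_e n e f (n + m) n 1
     - sergeev_e n e f (n + m) n 1 * sergeev_e n e f (n + k) n 1).
Proof.
have hn1 : (n.-1 < n)%N by rewrite ltn_predL.
pose i : 'I_n := Ordinal hn1.
pose j : 'I_n := Ordinal hn.
have G := @Grel n A e f hrel.
pose x := fun r => Tp e f r (i,false) (j,false).
pose y := fun r => Tp e f r (i,true) (j,false).
have two : forall u : A, u + u = 0 -> u = 0.
  move=> u h.
  have h2 : (2%:R : algC) != 0 by rewrite Num.Theory.pnatr_eq0.
  by rewrite -[u]scale1r -(mulVf h2) -scalerA scaler_nat (mulr2n u) h scaler0.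
have x0c : forall q, x 0%N * x q = x q * x 0%N.
  by move=> q; rewrite /x (_ : Tp e f 0 (i,false) (j,false) = dl (i,false) (j,false)) // dlC.
have rel : forall r s, cc x r.+2 s - cc x r s.+2 - cc x r.+1 s - cc x r s.+1 = BB y r s.
  by move=> r s; exact: (@relE n A e f G i j r s).
have ev : ~~ odd (n + k + (n + m)) by rewrite !oddD hk hm; case: (odd n).
have key := @cc_even A x y two x0c rel _ _ ev.
have hi : (i : nat).+1 = n by rewrite /= prednK.
have sE q : (0 < q)%N -> sergeev_e n e f q n 1 = x q.
  move=> hq; have := proj1 (@serg n A e f q.-1 i j).
  by rewrite hi prednK // /sergeev_e => ->.
rewrite !sE ?addn_gt0 ?hn //.
have -> : x (n + k)%N * x (n + m)%N - x (n + m)%N * x (n + k)%N = cc x (n + k) (n + m) by [].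
by rewrite key; case: hL.
Qed.
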